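(* Let $\tau\in(0,\infty]$ and let $\{(\theta_i,\omega_i)\}_{i=1}^N$ be a smooth solution on $[0,\tau)$ of the second-order Kuramoto model with bonding force $$\dot\theta_i=\omega_i,\qquad \dot\omega_i=\frac{1}{N}\sum_{j=1}^N\big[\kappa_0\cos(\theta_j-\theta_i)+\kappa_1\big](\omega_j-\omega_i)+\frac{\kappa_2}{N}\sum_{j=1}^N\big[|\theta_j-\theta_i|-\theta^\infty_{ij}\big]\operatorname{sgn}(\theta_j-\theta_i),\quad i\in[N].$$ Then for all $t\in[0,\tau)$, $$\mathcal{E}(t)+\int_0^t\mathcal{P}(s)\,ds=\mathcal{E}(0),\qquad \mathcal{P}:=\frac{1}{2N}\sum_{i,j=1}^N\big(\kappa_0\cos(\theta_j-\theta_i)+\kappa_1\big)|\omega_j-\omega_i|^2.$$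
   Context: $N\ge 2$, $[N]=\{1,\dots,N\}$, $\kappa_0,\kappa_1,\kappa_2\ge 0$ are constants, $[\theta^\infty_{ij}]$ is a real $N\times N$ matrix with $\theta^\infty_{ii}=0$ and $\theta^\infty_{ij}=\theta^\infty_{ji}$; $\operatorname{sgn}$ is the sign function. The total energy is $\mathcal{E}:=\frac12\sum_{i=1}^N|\omega_i|^2+\frac{\kappa_2}{4N}\sum_{i,j=1}^N\big(|\theta_j-\theta_i|-\theta^\infty_{ij}\big)^2$. *)

(* Defs.v *)
From Stdlib Require Import Reals Lra.
From Coquelicot Require Import Coquelicot.
Open Scope R_scope.

Definition sgn (x : R) : R :=
  if Rlt_dec 0 x then 1 else if Rlt_dec x 0 then -1 else 0.

(* sumI N f = f 0 + ... + f (N-1); particle i of the paper is index i-1 here *)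
Fixpoint sumI (N : nat) (f : nat -> R) : R :=
  match N with
  | O => 0
  | S n => sumI n f + f n
  end.

Definition kuramoto_rhs (N : nat) (k0 k1 k2 : R) (thinf : nat -> nat -> R)
  (th om : nat -> R) (i : nat) : R :=
  / INR N * sumI N (fun j => (k0 * cos (th j - th i) + k1) * (om j - om i))
  + k2 / INR N * sumI N (fun j => (Rabs (th j - th i) - thinf i j) * sgn (th j - th i)).

Definition energy (N : nat) (k2 : R) (thinf : nat -> nat -> R)
  (th om : nat -> R) : R :=
  / 2 * sumI N (fun i => (om i) ^ 2)
  + k2 / (4 * INR N) *
    sumI N (fun i => sumI N (fun j => (Rabs (th j - th i) - thinf i j) ^ 2)).

Definition production (N : nat) (k0 k1 : R) (th om : nat -> R) : R :=
  / (2 * INR N) *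
    sumI N (fun i => sumI N (fun j =>
      (k0 * cos (th j - th i) + k1) * (Rabs (om j - om i)) ^ 2)).

(* Main.v *)
Require Import Defs.
From Stdlib Require Import Reals Lra Lia List.
From Coquelicot Require Import Coquelicot.
Open Scope R_scope.

Lemma sumI_ext n f g : (forall i, (i < n)%nat -> f i = g i) -> sumI n f = sumI n g.
Proof.
  induction n; simpl; intros H; auto.
  rewrite IHn by (intros; apply H; lia). rewrite H by lia. reflexivity.
Qed.

Lemma sumI_plus n f g : sumI n (fun i => f i + g i) = sumI n f + sumI n g.
Proof. induction n; simpl; [ring| rewrite IHn; ring]. Qed.

Lemma sumI_scal n k f : k * sumI n f = sumI n (fun i => k * f i).
Proof. induction n; simpl; [ring| rewrite <- IHn; ring]. Qed.

Lemma sumI_lin2 n a b f g : a * sumI n f + b * sumI n g = sumI n (fun j => a * f j + b * g j).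
Proof. rewrite sumI_plus, !sumI_scal. reflexivity. Qed.

Lemma sumI_swap n m (f : nat -> nat -> R) :
  sumI n (fun i => sumI m (fun j => f i j)) = sumI m (fun j => sumI n (fun i => f i j)).
Proof.
  induction n; simpl.
  - induction m; simpl; [reflexivity| rewrite <- IHm; ring].
  - rewrite IHn. rewrite <- sumI_plus. reflexivity.
Qed.

Lemma sumI_anti n (U : nat -> nat -> R) :
  (forall i j, (i < n)%nat -> (j < n)%nat -> U i j + U j i = 0) ->
  sumI n (fun i => sumI n (fun j => U i j)) = 0.
Proof.
  intros H.
  assert (E : sumI n (fun i => sumI n (fun j => U i j)) + sumI n (fun i => sumI n (fun j => U j i)) = 0).
  { rewrite <- sumI_plus. transitivity (sumI n (fun _ => 0)).
    - apply sumI_ext; intros i Hi. rewrite <- sumI_plus. transitivity (sumI n (fun _ => 0)).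
      + apply sumI_ext; intros j Hj. apply H; auto.
      + clear. induction n; simpl; lra.
    - clear. induction n; simpl; lra. }
  rewrite (sumI_swap n n (fun j i => U i j)) in E. lra.
Qed.

Lemma sumI_lin4 n c1 c2 c3 c4 (f1 f2 f3 f4 : nat -> nat -> R) :
  c1 * sumI n (fun i => sumI n (fun j => f1 i j)) + c2 * sumI n (fun i => sumI n (fun j => f2 i j))
  + c3 * sumI n (fun i => sumI n (fun j => f3 i j)) + c4 * sumI n (fun i => sumI n (fun j => f4 i j))
  = sumI n (fun i => sumI n (fun j => c1 * f1 i j + c2 * f2 i j + c3 * f3 i j + c4 * f4 i j)).
Proof.
  rewrite !sumI_scal, <- !sumI_plus. apply sumI_ext; intros i _.
  rewrite !sumI_scal, <- !sumI_plus. reflexivity.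
Qed.

Lemma sgn_opp x : sgn (- x) = - sgn x.
Proof. unfold sgn; repeat destruct Rlt_dec; lra. Qed.

Lemma abs_sgn x : Rabs x * sgn x = x.
Proof. unfold sgn, Rabs; repeat destruct Rlt_dec; destruct Rcase_abs; lra. Qed.

Lemma sgn_vals x : sgn x = 1 \/ sgn x = -1 \/ sgn x = 0.
Proof. unfold sgn; repeat destruct Rlt_dec; auto. Qed.

Lemma abs_sq x : Rabs x * Rabs x = x * x.
Proof. unfold Rabs; destruct Rcase_abs; ring. Qed.

Fixpoint vals (c : nat -> R) (n : nat) : list R :=
  match n with
  | O => 0 :: nil
  | S n => flat_map (fun v => (v + c n) :: (v - c n) :: v :: nil) (vals c n)
  end.

Lemma vals_in c n e : (forall j, e j = 1 \/ e j = -1 \/ e j = 0) ->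
  In (sumI n (fun j => c j * e j)) (vals c n).
Proof.
  intros He. induction n; simpl; auto.
  apply in_flat_map. exists (sumI n (fun j => c j * e j)). split; auto.
  destruct (He n) as [H|[H|H]]; rewrite H; simpl.
  - left; ring.
  - right; left; ring.
  - right; right; left; ring.
Qed.

Lemma avoid_list (L : list R) : forall p q, p < q -> exists y, p < y < q /\ ~ In y L.
Proof.
  induction L as [|x L IH]; intros p q Hpq.
  - exists ((p+q)/2). split; [lra| simpl; auto].
  - destruct (Rle_dec x ((p+q)/2)).
    + destruct (IH ((p+q)/2) q) as [y [Hy Hn]]; [lra|].
      exists y; split; [lra|]. simpl; intros [H|H]; [lra|auto].
    + destruct (IH p ((p+q)/2)) as [y [Hy Hn]]; [lra|].
      exists y; split; [lra|]. simpl; intros [H|H]; [lra|auto].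
Qed.

Lemma right_smaller g c l : derivable_pt_lim g c l -> l < 0 ->
  forall eta, 0 < eta -> exists h, 0 < h < eta /\ g (c + h) < g c.
Proof.
  intros Hd Hl eta Heta.
  destruct (Hd (- l)) as [d Hdd]; [lra|].
  set (h := Rmin (d/2) (eta/2)).
  assert (Hh : 0 < h) by (unfold h; apply Rmin_pos; destruct d; simpl; lra).
  assert (Hh2 : h <= d/2) by apply Rmin_l.
  assert (Hh3 : h <= eta/2) by apply Rmin_r.
  exists h; split; [lra|].
  assert (Hq := Hdd h ltac:(lra) ltac:(rewrite Rabs_pos_eq; destruct d; simpl in *; lra)).
  apply Rabs_def2 in Hq. destruct Hq as [Hq _].
  assert (Hneg : (g (c + h) - g c) / h < 0) by lra.
  assert (E : g (c + h) - g c = (g (c + h) - g c) / h * h) by (field; lra).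
  nra.
Qed.

Lemma left_smaller g c l : derivable_pt_lim g c l -> 0 < l ->
  forall eta, 0 < eta -> exists h, 0 < h < eta /\ g (c - h) < g c.
Proof.
  intros Hd Hl eta Heta.
  destruct (Hd l) as [d Hdd]; [lra|].
  set (h := Rmin (d/2) (eta/2)).
  assert (Hh : 0 < h) by (unfold h; apply Rmin_pos; destruct d; simpl; lra).
  assert (Hh2 : h <= d/2) by apply Rmin_l.
  assert (Hh3 : h <= eta/2) by apply Rmin_r.
  exists h; split; [lra|].
  assert (Hq := Hdd (- h) ltac:(lra) ltac:(rewrite Rabs_Ropp, Rabs_pos_eq; destruct d; simpl in *; lra)).
  apply Rabs_def2 in Hq. destruct Hq as [_ Hq].
  assert (Hpos : 0 < (g (c + - h) - g c) / - h) by lra.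
  assert (E : g (c + - h) - g c = - ((g (c + - h) - g c) / - h * h)) by (field; lra).
  replace (c - h) with (c + - h) by ring. nra.
Qed.

Lemma darboux_lt f df a b y : a < b ->
  (forall x, a <= x <= b -> is_derive f x (df x)) ->
  df a < y < df b -> exists c, a < c < b /\ df c = y.
Proof.
  intros Hab Hd Hy.
  set (g := fun x => f x - y * x).
  assert (Hg : forall x, a <= x <= b -> derivable_pt_lim g x (df x - y)).
  { intros x Hx. apply is_derive_Reals. unfold g.
    replace (df x - y) with (minus (df x) (y * 1)) by (unfold minus, plus, opp; simpl; ring).
    apply (is_derive_minus f (fun x => y * x)); [apply Hd; auto|].
    apply is_derive_scal. apply (is_derive_id x). }
  destruct (continuity_ab_min g a b) as [m [Hm Hmab]]; [lra| |].
  { intros c Hc. apply derivable_continuous_pt. exists (df c - y). apply Hg; auto. }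
  exists m.
  destruct (Rtotal_order (df m - y) 0) as [Hl|[Hl|Hl]].
  - exfalso. assert (m < b) by (destruct (Req_dec m b); [subst; lra| lra]).
    destruct (right_smaller g m _ (Hg m Hmab) Hl (b - m)) as [h [Hh Hlt]]; [lra|].
    assert (g m <= g (m + h)) by (apply Hm; lra). lra.
  - split; [|lra].
    assert (m <> a) by (intro; subst; lra). assert (m <> b) by (intro; subst; lra). lra.
  - exfalso. assert (a < m) by (destruct (Req_dec m a); [subst; lra| lra]).
    destruct (left_smaller g m _ (Hg m Hmab) Hl (m - a)) as [h [Hh Hlt]]; [lra|].
    assert (g m <= g (m - h)) by (apply Hm; lra). lra.
Qed.

Lemma deriv_finite_const f df a b (L : list R) : a <= b ->
  (forall x, a <= x <= b -> is_derive f x (df x)) ->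
  (forall x, a <= x <= b -> In (df x) L) -> df a = df b.
Proof.
  intros Hab Hd HL.
  destruct (Req_dec a b) as [->|Hne]; [reflexivity|].
  assert (Hab' : a < b) by lra.
  destruct (Rtotal_order (df a) (df b)) as [Hl|[Hl|Hl]]; auto; exfalso.
  - destruct (avoid_list L (df a) (df b) Hl) as [y [Hy Hn]].
    destruct (darboux_lt f df a b y Hab' Hd Hy) as [c [Hc Hcy]].
    apply Hn. rewrite <- Hcy. apply HL; lra.
  - destruct (avoid_list L (df b) (df a) Hl) as [y [Hy Hn]].
    destruct (darboux_lt (fun x => - f x) (fun x => - df x) a b (- y) Hab') as [c [Hc Hcy]].
    + intros x Hx. apply (is_derive_opp f x (df x)). apply Hd; auto.
    + lra.
    + apply Hn. replace y with (df c) by lra. apply HL; lra.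
Qed.

Lemma dval (f : R -> R) (x a b : R) : is_derive f x a -> a = b -> is_derive f x b.
Proof. intros H ->; exact H. Qed.

Lemma dplus (f g : R -> R) (x a b : R) : is_derive f x a -> is_derive g x b ->
  is_derive (fun y => f y + g y) x (a + b).
Proof. intros. apply (is_derive_plus f g x a b); auto. Qed.

Lemma dminus (f g : R -> R) (x a b : R) : is_derive f x a -> is_derive g x b ->
  is_derive (fun y => f y - g y) x (a - b).
Proof. intros. apply (is_derive_minus f g x a b); auto. Qed.

Lemma dmult (f g : R -> R) (x a b : R) : is_derive f x a -> is_derive g x b ->
  is_derive (fun y => f y * g y) x (a * g x + f x * b).
Proof. intros. apply (is_derive_mult f g x a b); auto. intros; apply Rmult_comm. Qed.

Lemma dconst (c x : R) : is_derive (fun _ => c) x 0.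
Proof. apply (is_derive_const c x). Qed.

Lemma dsum n (f : nat -> R -> R) (df : nat -> R) (x : R) :
  (forall i, (i < n)%nat -> is_derive (f i) x (df i)) ->
  is_derive (fun y => sumI n (fun i => f i y)) x (sumI n df).
Proof.
  induction n; simpl; intros H.
  - apply dconst.
  - apply dplus; [apply IHn; intros; apply H; lia| apply H; lia].
Qed.

Lemma cplus (f g : R -> R) (x : R) : continuous f x -> continuous g x -> continuous (fun y : R => f y + g y) x.
Proof. intros. apply (continuous_plus f g x); auto. Qed.

Lemma cmult (f g : R -> R) (x : R) : continuous f x -> continuous g x -> continuous (fun y : R => f y * g y) x.
Proof. intros. apply (continuous_mult f g x); auto. Qed.

Lemma cminus (f g : R -> R) (x : R) : continuous f x -> continuous g x -> continuous (fun y : R => f y - g y) x.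
Proof. intros. apply (continuous_minus f g x); auto. Qed.

Lemma cconst (c x : R) : continuous (fun _ : R => c) x.
Proof. apply continuous_const. Qed.

Lemma cpow (f : R -> R) (x : R) n : continuous f x -> continuous (fun y : R => f y ^ n) x.
Proof. intros H. induction n; simpl; [apply cconst| apply cmult; auto]. Qed.

Lemma csum n (f : nat -> R -> R) (x : R) :
  (forall i, (i < n)%nat -> continuous (f i) x) ->
  continuous (fun y => sumI n (fun i => f i y)) x.
Proof.
  induction n; simpl; intros H.
  - apply cconst.
  - apply cplus; [apply IHn; intros; apply H; lia| apply H; lia].
Qed.

Lemma dlin2 n a b (f g : nat -> nat -> R) :
  a * sumI n (fun i => sumI n (fun j => f i j)) + b * sumI n (fun i => sumI n (fun j => g i j))
  = sumI n (fun i => sumI n (fun j => a * f i j + b * g i j)).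
Proof.
  rewrite sumI_lin2. apply sumI_ext; intros i _. apply sumI_lin2.
Qed.

Lemma x_sgn x : x * sgn x = Rabs x.
Proof. unfold sgn, Rabs; repeat destruct Rlt_dec; destruct Rcase_abs; lra. Qed.

Lemma loc_pos x : 0 < x -> locally x (fun y => 0 < y).
Proof.
  intros H. exists (mkposreal x H). intros y Hy.
  change (Rabs (y - x) < x) in Hy. apply Rabs_def2 in Hy. lra.
Qed.

Lemma loc_neg x : x < 0 -> locally x (fun y => y < 0).
Proof.
  intros H. assert (H' : 0 < - x) by lra. exists (mkposreal (-x) H'). intros y Hy.
  change (Rabs (y - x) < - x) in Hy. apply Rabs_def2 in Hy. lra.
Qed.

Lemma open_int (x : R) (tau : Rbar) : 0 < x -> Rbar_lt x tau -> locally x (fun y => 0 < y /\ Rbar_lt y tau).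
Proof.
  intros H1 H2. destruct tau as [T| |]; simpl in H2.
  - assert (Hp : 0 < Rmin x (T - x)) by (apply Rmin_pos; lra).
    exists (mkposreal _ Hp). intros y Hy.
    change (Rabs (y - x) < Rmin x (T - x)) in Hy. apply Rabs_def2 in Hy.
    pose proof (Rmin_l x (T - x)). pose proof (Rmin_r x (T - x)). simpl. lra.
  - exists (mkposreal x H1). intros y Hy.
    change (Rabs (y - x) < x) in Hy. apply Rabs_def2 in Hy. simpl. split; auto; lra.
  - contradiction.
Qed.

Lemma rbar_le (x y : R) (tau : Rbar) : x <= y -> Rbar_lt y tau -> Rbar_lt x tau.
Proof. destruct tau; simpl; auto; lra. Qed.

Lemma clamp_cont (f : R -> R) (tau : Rbar) (z : R) :
  filterlim f (at_right 0) (locally (f 0)) ->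
  (forall s, 0 < s -> Rbar_lt s tau -> continuous f s) ->
  Rbar_lt z tau -> continuous (fun s => f (Rmax 0 s)) z.
Proof.
  intros H0 Hc Hz.
  destruct (Rtotal_order z 0) as [Hl|[He|Hg]].
  - apply (continuous_ext_loc _ (fun _ => f 0)); [|apply cconst].
    apply (filter_imp (fun y => y < 0)); [|apply loc_neg; auto].
    intros y Hy. rewrite Rmax_left by lra. reflexivity.
  - subst z. intros P HP. rewrite Rmax_left in HP by lra.
    destruct (H0 P HP) as [d Hd].
    exists d. intros y Hy. destruct (Rle_dec y 0).
    + rewrite Rmax_left by lra. apply locally_singleton in HP. exact HP.
    + rewrite Rmax_right by lra. apply Hd; auto; lra.
  - apply (continuous_ext_loc _ f); [|apply Hc; auto].
    apply (filter_imp (fun y => 0 < y)); [|apply loc_pos; auto].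
    intros y Hy. rewrite Rmax_right by lra. reflexivity.
Qed.

Lemma Econt N k2 thinf (X Y : nat -> R -> R) z :
  (forall j, (j < N)%nat -> continuous (X j) z /\ continuous (Y j) z) ->
  continuous (fun s => energy N k2 thinf (fun j => X j s) (fun j => Y j s)) z.
Proof.
  intros H. unfold energy. apply cplus; apply cmult; try apply cconst.
  - apply csum; intros; apply cpow; apply H; auto.
  - apply csum; intros i Hi; apply csum; intros j Hj. apply cpow. apply cminus; [|apply cconst].
    apply continuous_Rabs_comp. apply cminus; apply H; auto.
Qed.

Lemma Pcont N k0 k1 (X Y : nat -> R -> R) z :
  (forall j, (j < N)%nat -> continuous (X j) z /\ continuous (Y j) z) ->
  continuous (fun s => production N k0 k1 (fun j => X j s) (fun j => Y j s)) z.
Proof.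
  intros H. unfold production. apply cmult; [apply cconst|].
  apply csum; intros i Hi; apply csum; intros j Hj. apply cmult.
  - apply cplus; [|apply cconst]. apply cmult; [apply cconst|].
    apply continuous_cos_comp. apply cminus; apply H; auto.
  - apply cpow. apply continuous_Rabs_comp. apply cminus; apply H; auto.
Qed.

Definition hfun N (thinf : nat -> nat -> R) (theta : nat -> R -> R) i s :=
  sumI N (fun j => thinf i j * sgn (theta j s - theta i s)).

Definition Cfun N k0 k1 k2 (theta omega : nat -> R -> R) i s :=
  / INR N * sumI N (fun j => (k0 * cos (theta j s - theta i s) + k1) * (omega j s - omega i s))
  + k2 / INR N * sumI N (fun j => theta j s - theta i s).

Lemma rhs_decomp N k0 k1 k2 thinf (theta omega : nat -> R -> R) i s :
  kuramoto_rhs N k0 k1 k2 thinf (fun j => theta j s) (fun j => omega j s) i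
  = Cfun N k0 k1 k2 theta omega i s - k2 / INR N * hfun N thinf theta i s.
Proof.
  unfold kuramoto_rhs, Cfun, hfun.
  rewrite (sumI_ext N (fun j => (Rabs (theta j s - theta i s) - thinf i j) * sgn (theta j s - theta i s))
     (fun j => 1 * (theta j s - theta i s) + (-1) * (thinf i j * sgn (theta j s - theta i s)))).
  - rewrite <- sumI_lin2. ring.
  - intros j _. rewrite Rmult_minus_distr_r, abs_sgn. ring.
Qed.

Lemma Ccont N k0 k1 k2 (theta omega : nat -> R -> R) i z :
  (i < N)%nat ->
  (forall j, (j < N)%nat -> continuous (theta j) z /\ continuous (omega j) z) ->
  continuous (Cfun N k0 k1 k2 theta omega i) z.
Proof.
  intros Hi H. unfold Cfun. apply cplus; apply cmult; try apply cconst.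
  - apply csum; intros j Hj. apply cmult.
    + apply cplus; [|apply cconst]. apply cmult; [apply cconst|].
      apply continuous_cos_comp. apply cminus; apply H; auto.
    + apply cminus; apply H; auto.
  - apply csum; intros j Hj. apply cminus; apply H; auto.
Qed.

Theorem proposition2p2
  (N : nat) (HN : (2 <= N)%nat)
  (k0 k1 k2 : R) (Hk0 : 0 <= k0) (Hk1 : 0 <= k1) (Hk2 : 0 <= k2)
  (thinf : nat -> nat -> R)
  (Hdiag : forall i, (i < N)%nat -> thinf i i = 0)
  (Hsym : forall i j, (i < N)%nat -> (j < N)%nat -> thinf i j = thinf j i)
  (tau : Rbar) (Htau : Rbar_lt 0 tau)
  (theta omega : nat -> R -> R)
  (Hcont0 : forall i, (i < N)%nat ->
     filterlim (theta i) (at_right 0) (locally (theta i 0)) /\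
     filterlim (omega i) (at_right 0) (locally (omega i 0)))
  (Hode : forall t, 0 < t -> Rbar_lt t tau -> forall i, (i < N)%nat ->
     is_derive (theta i) t (omega i t) /\
     is_derive (omega i) t
       (kuramoto_rhs N k0 k1 k2 thinf (fun j => theta j t) (fun j => omega j t) i)) :
  forall t, 0 <= t -> Rbar_lt t tau ->
    energy N k2 thinf (fun j => theta j t) (fun j => omega j t)
    + RInt (fun s => production N k0 k1 (fun j => theta j s) (fun j => omega j s)) 0 t
    = energy N k2 thinf (fun j => theta j 0) (fun j => omega j 0).
Proof.
  intros t Ht0 Htt.
  assert (HNpos : 0 < INR N) by (apply lt_0_INR; lia).
  destruct (Req_dec t 0) as [->|Htne].
  { rewrite RInt_point. change (zero : R) with 0. ring. }
  assert (Ht : 0 < t) by lra.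
  assert (Hcth : forall s, 0 < s -> Rbar_lt s tau -> forall j, (j < N)%nat ->
            continuous (theta j) s /\ continuous (omega j) s).
  { intros s Hs Hst j Hj. destruct (Hode s Hs Hst j Hj) as [H1 H2].
    split; apply (ex_derive_continuous (K := R_AbsRing) (V := R_NormedModule)); eexists; eauto. }
  (* the sign-part is constant *)
  assert (Hh0 : forall a b i, 0 < a -> a <= b -> Rbar_lt b tau -> (i < N)%nat ->
            k2 * hfun N thinf theta i a = k2 * hfun N thinf theta i b).
  { intros a b i Ha Hab Hb Hi.
    set (C := Cfun N k0 k1 k2 theta omega i).
    assert (HdI : forall x, a <= x <= b -> is_derive (fun s => RInt C a s) x (C x)).
    { intros x Hx. apply (is_derive_RInt C (fun s => RInt C a s) a x).
      - apply (filter_imp (fun y => 0 < y /\ Rbar_lt y tau)); [|apply open_int; [lra| apply (rbar_le x b); lra||auto]].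
        intros y [Hy1 Hy2]. apply (RInt_correct (V := R_CompleteNormedModule)). apply (ex_RInt_continuous (V := R_CompleteNormedModule)).
        intros z Hz. apply Ccont; auto. apply Hcth.
        + pose proof (Rmin_glb_lt a y 0). pose proof (Rmin_l a y). pose proof (Rmin_r a y).
          destruct Hz. lra.
        + apply (rbar_le z (Rmax a y)); [lra|]. unfold Rmax; destruct Rle_dec; auto.
          apply (rbar_le a b); auto.
      - apply Ccont; auto. apply Hcth; [lra|]. apply (rbar_le x b); [lra|auto]. }
    assert (Hd := deriv_finite_const (fun s => omega i s - RInt C a s)
               (fun s => - (k2 / INR N) * hfun N thinf theta i s) a b
               (map (fun v => - (k2 / INR N) * v) (vals (thinf i) N)) Hab).
    assert (E : - (k2 / INR N) * hfun N thinf theta i a = - (k2 / INR N) * hfun N thinf theta i b).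
    { apply Hd.
      - intros x Hx. eapply dval.
        + apply dminus; [apply (Hode x); auto; try lra; apply (rbar_le x b); [lra|auto]|apply HdI; auto].
        + rewrite rhs_decomp. unfold C. ring.
      - intros x Hx. apply in_map. unfold hfun.
        apply (vals_in (thinf i) N (fun j => sgn (theta j x - theta i x))).
        intros j; apply sgn_vals. }
    replace (k2 * hfun N thinf theta i a) with (- INR N * (- (k2 / INR N) * hfun N thinf theta i a)) by (field; lra).
    rewrite E. field; lra. }
  assert (Hh : forall s i, 0 < s -> Rbar_lt s tau -> (i < N)%nat ->
            k2 * hfun N thinf theta i s = k2 * hfun N thinf theta i t).
  { intros s i Hs Hst Hi. destruct (Rle_dec s t).
    - apply Hh0; auto.
    - symmetry. apply Hh0; auto; lra. }
  set (K := fun i => hfun N thinf theta i t).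
  set (Etil := fun s => / 2 * sumI N (fun i => omega i s * omega i s)
     + k2 / (4 * INR N) * (sumI N (fun i => sumI N (fun j =>
          (theta j s - theta i s) * (theta j s - theta i s) + thinf i j * thinf i j))
        + 4 * sumI N (fun i => theta i s * K i))).
  assert (HE : forall s, 0 < s -> Rbar_lt s tau ->
     energy N k2 thinf (fun j => theta j s) (fun j => omega j s) = Etil s).
  { intros s Hs Hst. unfold energy, Etil.
    assert (E1 : sumI N (fun i => omega i s ^ 2) = sumI N (fun i => omega i s * omega i s))
      by (apply sumI_ext; intros; ring).
    assert (E2 : sumI N (fun i => sumI N (fun j => (Rabs (theta j s - theta i s) - thinf i j) ^ 2))
       = 1 * sumI N (fun i => sumI N (fun j =>
          (theta j s - theta i s) * (theta j s - theta i s) + thinf i j * thinf i j))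
         + (-2) * sumI N (fun i => sumI N (fun j => thinf i j * Rabs (theta j s - theta i s)))).
    { rewrite dlin2. apply sumI_ext; intros i _; apply sumI_ext; intros j _.
      rewrite <- abs_sq. ring. }
    assert (E3 : 1 * sumI N (fun i => sumI N (fun j => thinf i j * Rabs (theta j s - theta i s)))
       + 2 * sumI N (fun i => sumI N (fun j => theta i s * (thinf i j * sgn (theta j s - theta i s)))) = 0).
    { rewrite dlin2. apply sumI_anti. intros i j Hi Hj.
      rewrite (Hsym j i Hj Hi).
      replace (theta i s - theta j s) with (- (theta j s - theta i s)) by ring.
      rewrite Rabs_Ropp, sgn_opp.
      rewrite <- (x_sgn (theta j s - theta i s)). ring. }
    assert (E4 : sumI N (fun i => sumI N (fun j => theta i s * (thinf i j * sgn (theta j s - theta i s))))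
       = sumI N (fun i => theta i s * hfun N thinf theta i s)).
    { apply sumI_ext; intros i _. unfold hfun. rewrite sumI_scal. reflexivity. }
    assert (E5 : k2 * sumI N (fun i => theta i s * hfun N thinf theta i s)
       = k2 * sumI N (fun i => theta i s * K i)).
    { rewrite !sumI_scal. apply sumI_ext; intros i Hi.
      replace (k2 * (theta i s * hfun N thinf theta i s)) with (theta i s * (k2 * hfun N thinf theta i s)) by ring.
      rewrite (Hh s i Hs Hst Hi). unfold K. ring. }
    rewrite E1, E2. rewrite E4 in E3.
    set (A := sumI N (fun i => sumI N (fun j =>
          (theta j s - theta i s) * (theta j s - theta i s) + thinf i j * thinf i j))) in *.
    set (B := sumI N (fun i => sumI N (fun j => thinf i j * Rabs (theta j s - theta i s)))) in *.
    set (Hs1 := sumI N (fun i => theta i s * hfun N thinf theta i s)) in *.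
    set (Ks := sumI N (fun i => theta i s * K i)) in *.
    replace B with (-2 * Hs1) by lra.
    replace (k2 / (4 * INR N) * (1 * A + -2 * (-2 * Hs1))) with (k2 / (4 * INR N) * A + / INR N * (k2 * Hs1)) by (field; lra).
    rewrite E5. field; lra. }
  assert (HdE : forall s, 0 < s -> Rbar_lt s tau ->
     is_derive Etil s (- production N k0 k1 (fun j => theta j s) (fun j => omega j s))).
  { intros s Hs Hst.
    set (r := fun i => kuramoto_rhs N k0 k1 k2 thinf (fun j => theta j s) (fun j => omega j s) i).
    assert (P1 : is_derive (fun y => sumI N (fun i => omega i y * omega i y)) s
                   (sumI N (fun i => 2 * omega i s * r i))).
    { apply dsum; intros i Hi.
      pose proof (proj2 (Hode s Hs Hst i Hi)) as Hw.
      pose proof (dmult _ _ _ _ _ Hw Hw) as Hy.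
      eapply dval; [exact Hy|]. unfold r. ring. }
    assert (P2 : is_derive (fun y => sumI N (fun i => sumI N (fun j =>
          (theta j y - theta i y) * (theta j y - theta i y) + thinf i j * thinf i j))) s
          (sumI N (fun i => sumI N (fun j => 2 * (theta j s - theta i s) * (omega j s - omega i s))))).
    { apply dsum; intros i Hi. apply dsum; intros j Hj.
      pose proof (proj1 (Hode s Hs Hst j Hj)) as Hj'. pose proof (proj1 (Hode s Hs Hst i Hi)) as Hi'.
      pose proof (dminus _ _ _ _ _ Hj' Hi') as Hx.
      pose proof (dplus _ _ _ _ _ (dmult _ _ _ _ _ Hx Hx) (dconst (thinf i j * thinf i j) s)) as Hy.
      eapply dval; [exact Hy|]. cbv beta. ring. }
    assert (P3 : is_derive (fun y => sumI N (fun i => theta i y * K i)) s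
          (sumI N (fun i => omega i s * K i))).
    { apply dsum; intros i Hi.
      pose proof (dmult _ _ _ _ _ (proj1 (Hode s Hs Hst i Hi)) (dconst (K i) s)) as Hy.
      eapply dval; [exact Hy|]. cbv beta. ring. }
    eapply dval.
    { unfold Etil. apply dplus; [apply is_derive_scal; exact P1|].
      apply is_derive_scal. apply dplus; [exact P2|]. apply is_derive_scal. exact P3. }
    set (a := fun i j => k0 * cos (theta j s - theta i s) + k1).
    assert (Q1 : sumI N (fun i => 2 * omega i s * r i) = sumI N (fun i => sumI N (fun j =>
        2 * omega i s * (/ INR N * (a i j * (omega j s - omega i s))
          + k2 / INR N * ((Rabs (theta j s - theta i s) - thinf i j) * sgn (theta j s - theta i s)))))).
    { apply sumI_ext; intros i Hi. unfold r, kuramoto_rhs. rewrite sumI_lin2, sumI_scal. reflexivity. }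
    assert (Q3 : k2 * sumI N (fun i => omega i s * K i) = sumI N (fun i => sumI N (fun j =>
        k2 * omega i s * (thinf i j * sgn (theta j s - theta i s))))).
    { rewrite sumI_scal. apply sumI_ext; intros i Hi.
      replace (k2 * (omega i s * K i)) with (omega i s * (k2 * K i)) by ring.
      unfold K. rewrite <- (Hh s i Hs Hst Hi). unfold hfun. rewrite !sumI_scal.
      apply sumI_ext; intros; ring. }
    assert (Z : / 2 * sumI N (fun i => sumI N (fun j =>
        2 * omega i s * (/ INR N * (a i j * (omega j s - omega i s))
          + k2 / INR N * ((Rabs (theta j s - theta i s) - thinf i j) * sgn (theta j s - theta i s)))))
      + k2 / (4 * INR N) * sumI N (fun i => sumI N (fun j => 2 * (theta j s - theta i s) * (omega j s - omega i s)))
      + / INR N * sumI N (fun i => sumI N (fun j => k2 * omega i s * (thinf i j * sgn (theta j s - theta i s))))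
      + / (2 * INR N) * sumI N (fun i => sumI N (fun j => (k0 * cos (theta j s - theta i s) + k1) * Rabs (omega j s - omega i s) ^ 2))
      = 0).
    { rewrite sumI_lin4. apply sumI_anti. intros i j Hi Hj. unfold a.
      rewrite (Hsym j i Hj Hi).
      replace (theta i s - theta j s) with (- (theta j s - theta i s)) by ring.
      replace (omega i s - omega j s) with (- (omega j s - omega i s)) by ring.
      rewrite Rabs_Ropp, sgn_opp, cos_neg, Rabs_Ropp, <- !Rsqr_pow2, <- !Rsqr_abs.
      pose proof (abs_sgn (theta j s - theta i s)) as HAS.
      remember (theta j s - theta i s) as X.
      remember (Rabs X) as AX. remember (sgn X) as SX.
      rewrite <- HAS. unfold Rsqr. field. lra. }
    rewrite Q1.
    unfold production.
    replace (k2 / (4 * INR N) * (sumI N (fun i => sumI N (fun j => 2 * (theta j s - theta i s) * (omega j s - omega i s))) +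
       4 * sumI N (fun i => omega i s * K i)))
     with (k2 / (4 * INR N) * sumI N (fun i => sumI N (fun j => 2 * (theta j s - theta i s) * (omega j s - omega i s)))
       + / INR N * (k2 * sumI N (fun i => omega i s * K i))) by (field; lra).
    rewrite Q3. lra. }
  set (Th := fun j s => theta j (Rmax 0 s)).
  set (Om := fun j s => omega j (Rmax 0 s)).
  assert (Hcc : forall z : R, Rbar_lt z tau -> forall j, (j < N)%nat ->
            continuous (Th j) z /\ continuous (Om j) z).
  { intros z Hz j Hj. destruct (Hcont0 j Hj) as [C1 C2]. split.
    - exact (clamp_cont (theta j) tau z C1 (fun s Hs Hst => proj1 (Hcth s Hs Hst j Hj)) Hz).
    - exact (clamp_cont (omega j) tau z C2 (fun s Hs Hst => proj2 (Hcth s Hs Hst j Hj)) Hz). }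
  set (Pc := fun s => production N k0 k1 (fun j => Th j s) (fun j => Om j s)).
  assert (HPc : forall z : R, Rbar_lt z tau -> continuous Pc z).
  { intros z Hz. apply Pcont. intros; apply Hcc; auto. }
  assert (HdI : forall z : R, Rbar_lt z tau -> is_derive (fun s => RInt Pc 0 s) z (Pc z)).
  { intros z Hz. apply (is_derive_RInt Pc (fun s => RInt Pc 0 s) 0 z); [|apply HPc; auto].
    assert (Hl : locally z (fun y => Rbar_lt y tau)).
    { destruct tau as [T| |]; simpl in Hz |- *.
      - assert (Hp : 0 < T - z) by lra. exists (mkposreal _ Hp). intros y Hy.
        change (Rabs (y - z) < T - z) in Hy. apply Rabs_def2 in Hy. simpl. lra.
      - exists (mkposreal 1 Rlt_0_1). intros; simpl; auto.
      - contradiction. }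
    refine (filter_imp _ _ _ Hl). intros y Hy.
    apply (RInt_correct (V := R_CompleteNormedModule)). apply (ex_RInt_continuous (V := R_CompleteNormedModule)).
    intros w Hw. apply HPc. apply (rbar_le w (Rmax 0 y)); [lra|].
    unfold Rmax; destruct Rle_dec; auto. }
  set (Gc := fun s => energy N k2 thinf (fun j => Th j s) (fun j => Om j s) + RInt Pc 0 s).
  destruct (MVT_gen Gc 0 t (fun _ => 0)) as [c [_ Hc]].
  - rewrite Rmin_left, Rmax_right by lra. intros x Hx.
    assert (Hxt : Rbar_lt x tau) by (apply (rbar_le x t); [lra|auto]).
    apply (is_derive_ext_loc (fun y => Etil y + RInt Pc 0 y)).
    + apply (filter_imp (fun y => 0 < y /\ Rbar_lt y tau)); [|apply open_int; auto; lra]. intros y [Hy1 Hy2].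
      unfold Gc, Th, Om. rewrite (Rmax_right 0 y) by lra. rewrite HE; auto.
    + eapply dval; [apply dplus; [apply HdE; auto; lra| apply HdI; auto]|].
      unfold Pc, Th, Om. rewrite (Rmax_right 0 x) by lra. ring.
  - rewrite Rmin_left, Rmax_right by lra. intros x Hx.
    assert (Hxt : Rbar_lt x tau) by (apply (rbar_le x t); [lra|auto]).
    apply continuity_pt_filterlim. apply cplus.
    + apply Econt. intros; apply Hcc; auto.
    + apply (ex_derive_continuous (K := R_AbsRing) (V := R_NormedModule)). eexists; apply HdI; auto.
  - unfold Gc, Th, Om in Hc. rewrite (Rmax_right 0 t) in Hc by lra.
    rewrite (Rmax_left 0 0) in Hc by lra. rewrite RInt_point in Hc.
    change (zero : R) with 0 in Hc.
    replace (RInt (fun s => production N k0 k1 (fun j => theta j s) (fun j => omega j s)) 0 t)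
      with (RInt Pc 0 t).
    + lra.
    + apply RInt_ext. rewrite Rmin_left, Rmax_right by lra. intros x Hx.
      unfold Pc, Th, Om. rewrite (Rmax_right 0 x) by lra. reflexivity.
Qed.
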